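(* Let $G$ be a finite group and let $\Gamma \le G$ be a subgroup. Then $\|\Gamma\|_W \le 1$, where $\Gamma$ is identified with its indicator function $\Gamma: G\to\{0,1\}$.
   Context: Let $\widehat{G}$ be a complete set of pairwise non-isomorphic irreducible unitary representations of $G$, and for $\rho\in\widehat G$ let $d_\rho$ be its dimension. For $f:G\to\mathbb{C}$ the Fourier transform at $\rho$ is the matrix $\widehat f(\rho)=\sum_{g\in G} f(g)\rho(g)$. For a matrix $M$, $\|M\| = \sqrt{\mathrm{tr}(MM^* )}$ is the Hilbert–Schmidt norm. The Wiener norm of $f$ is $\|f\|_W = \frac{1}{|G|}\sum_{\rho\in\widehat G} d_\rho \|\widehat f(\rho)\|$. *)

(* Defs.v *)
From mathcomp Require Import all_boot all_order all_algebra all_fingroup all_solvable all_field all_character.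
Set Implicit Arguments. Unset Strict Implicit. Unset Printing Implicit Defensive.
Import GRing.Theory Num.Theory.
Local Open Scope ring_scope.

Definition adjmx m n (A : 'M[algC]_(m, n)) : 'M[algC]_(n, m) := (map_mx (@Num.conj algC) A)^T.

Definition hs_norm n (M : 'M[algC]_n) : algC := sqrtC (\tr (M *m adjmx M)).

Definition unitary_repr (gT : finGroupType) (G : {group gT}) n
  (rG : mx_representation algC G n) : Prop :=
  forall g, g \in G -> rG g *m adjmx (rG g) = 1%:M.

Definition fourier (gT : finGroupType) (G : {group gT}) n
  (rG : mx_representation algC G n) (f : gT -> algC) : 'M[algC]_n :=
  \sum_(g in G) f g *: rG g.

Definition wiener_norm (gT : finGroupType) (G : {group gT}) (I : finType)
  (d : I -> nat) (rho : forall i, mx_representation algC G (d i)) (f : gT -> algC) : algC :=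
  (#|G|%:R)^-1 * \sum_(i : I) (d i)%:R * hs_norm (fourier (rho i) f).

Definition indicator (gT : finGroupType) (H : {set gT}) : gT -> algC :=
  fun g => (g \in H)%:R.

(* Main.v *)
Require Import Defs.
From mathcomp Require Import all_boot all_order all_algebra all_fingroup all_solvable all_field all_character.
Import GRing.Theory Num.Theory.
Local Open Scope ring_scope.

Section Key.
Variables (gT : finGroupType) (G Gam : {group gT}) (n : nat)
  (rG : mx_representation algC G n).
Hypothesis sGG : Gam \subset G.
Hypothesis unit : unitary_repr rG.

Let F := \sum_(g in Gam) rG g.

Lemma four_ind : fourier rG (indicator Gam) = F.
Proof.
rewrite /fourier /F.
rewrite (eq_bigr (fun g => if g \in Gam then rG g else 0)); last first.
  by move=> g _; rewrite /indicator; case: (g \in Gam); rewrite ?scale1r ?scale0r.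
rewrite -big_mkcondr; apply: eq_bigl => g.
by case gG: (g \in Gam); rewrite ?andbT ?andbF // (subsetP sGG).
Qed.

Lemma adjmx_sum : adjmx F = \sum_(g in Gam) adjmx (rG g).
Proof.
apply/matrixP => i j; rewrite /adjmx /F !mxE summxE rmorph_sum summxE.
by apply: eq_bigr => g _; rewrite !mxE.
Qed.

Lemma adj_repr g : g \in G -> adjmx (rG g) = rG g^-1%g.
Proof.
move=> Gg; have U := @unit g Gg.
rewrite repr_mxV // -[adjmx _]mul1mx -(mulVmx (repr_mx_unit rG Gg)) -mulmxA U mulmx1.
by [].
Qed.

Lemma adjF : adjmx F = F.
Proof.
rewrite adjmx_sum.
rewrite (eq_bigr (fun g => rG g^-1%g)); last by move=> g Gg; rewrite adj_repr // (subsetP sGG).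
rewrite /F (reindex_inj invg_inj) /=; apply: eq_big => g; first by rewrite groupV.
by rewrite invgK.
Qed.

Lemma mulRF x : x \in Gam -> rG x *m F = F.
Proof.
move=> Gx; rewrite /F mulmx_sumr.
rewrite (eq_bigr (fun g => rG (x * g)%g)); last first.
  by move=> g Gg; rewrite repr_mxM // (subsetP sGG).
by rewrite [RHS](reindex_inj (mulgI x)) /=; apply: eq_bigl => g; rewrite groupMl.
Qed.

Lemma FF : F *m F = #|Gam|%:R *: F.
Proof.
rewrite {1}/F mulmx_suml (eq_bigr (fun _ => F)); last by move=> g Gg; rewrite mulRF.
by rewrite sumr_const scaler_nat.
Qed.

Lemma trF : \tr F = #|Gam|%:R * '['Res[Gam] (cfRepr rG), 1]_Gam.
Proof.
rewrite cfdotE mulrA mulfV ?mul1r; last by rewrite pnatr_eq0 -lt0n cardG_gt0.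
rewrite /F raddf_sum /=; apply: eq_bigr => g Gg.
by rewrite cfResE // cfun1E Gg conjC1 mulr1 cfunE (subsetP sGG).
Qed.

Lemma hsF : hs_norm (fourier rG (indicator Gam)) =
   #|Gam|%:R * sqrtC ('['Res[Gam] (cfRepr rG), 1]_Gam).
Proof.
rewrite /hs_norm four_ind adjF FF mxtraceZ trF mulrA -expr2.
rewrite sqrtCM ?sqrCK ?ler0n //.
  by rewrite qualifE /= exprn_ge0 ?ler0n.
rewrite qualifE /= natr_ge0 // Cnat_cfdot_char ?cfun1_char ?cfRes_char ?cfRepr_char //.
Qed.
End Key.

Lemma sqrtC_le_nat (m : algC) : m \in Num.nat -> sqrtC m <= m.
Proof.
move=> /natrP [k ->]; case: k => [|k]; first by rewrite sqrtC0.
rewrite -{2}[k.+1%:R]sqrCK ?ler0n // ler_sqrtC ?qualifE /= ?ler0n ?exprn_ge0 //.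
by rewrite -natrX ler_nat expnS leq_pmulr // expn_gt0.
Qed.

Theorem lemma6 (gT : finGroupType) (G Gamma : {group gT}) (I : finType)
  (d : I -> nat) (rho : forall i, mx_representation algC G (d i)) :
  Gamma \subset G ->
  (forall i, unitary_repr (rho i)) ->
  (forall i, mx_irreducible (rho i)) ->
  (forall i j, mx_rsim (rho i) (rho j) -> i = j) ->
  (forall n (rG : mx_representation algC G n),
      mx_irreducible rG -> exists i, mx_rsim rG (rho i)) ->
  wiener_norm rho (indicator Gamma) <= 1.
Proof.
move=> sGG unit irrR injR surjR.
set m := fun i => '['Res[Gamma] (cfRepr (rho i)), 1]_Gamma.
have mN i : m i \in Num.nat.
  by rewrite Cnat_cfdot_char ?cfun1_char ?cfRes_char ?cfRepr_char.
pose h i := cfIirr (cfRepr (rho i)).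
have hE i : 'chi_(h i) = cfRepr (rho i).
  apply: cfIirrE; apply/irr_reprP; exists (Representation (rho i)); [exact: irrR | by []].
have h_inj : injective h.
  move=> i j eq_ij; apply: injR; apply/cfRepr_rsimP; by rewrite -!hE eq_ij.
have h_surj j : exists i, h i = j.
  have /irr_reprP [rG irrG chiE] := mem_irr j.
  have [i simi] := surjR _ rG irrG.
  exists i; apply: irr_inj; rewrite /= hE -(cfRepr_sim simi) -chiE //.
have h_bij : bijective h.
  apply: (inj_card_bij h_inj).
  rewrite -(card_codom h_inj); apply: subset_leq_card; apply/subsetP => j _.
  by have [i <-] := h_surj j; apply: codom_f.
have Gpos : 0 < #|G|%:R :> algC by rewrite ltr0n cardG_gt0.
have Gampos : 0 < #|Gamma|%:R :> algC by rewrite ltr0n cardG_gt0.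
have sumE : \sum_i (d i)%:R * (#|Gamma|%:R * m i) = #|G|%:R :> algC.
  have E1 i : #|Gamma|%:R * m i = \sum_(g in Gamma) cfRepr (rho i) g.
    rewrite /m cfdotE mulrA mulfV ?mul1r ?lt0r_neq0 //; apply: eq_bigr => g Gg.
    by rewrite cfResE // cfun1E Gg conjC1 mulr1.
  rewrite (eq_bigr (fun i => \sum_(g in Gamma) 'chi[G]_(h i) 1%g * 'chi_(h i) g)); last first.
    by move=> i _; rewrite E1 big_distrr /= hE cfRepr1.
  rewrite exchange_big /=.
  rewrite (eq_bigr (fun g => cfReg G g)); last first.
    move=> g _; rewrite cfReg_sum sum_cfunE.
    rewrite [RHS](reindex h) /=; last by apply: onW_bij.
    by apply: eq_bigr => i _; rewrite cfunE.
  rewrite (bigD1 1%g) //= cfRegE eqxx mulr1n big1 ?addr0 // => g /andP [_ ng1].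
  by rewrite cfRegE (negbTE ng1).
rewrite /wiener_norm.
rewrite (eq_bigr (fun i => (d i)%:R * (#|Gamma|%:R * sqrtC (m i)))); last first.
  by move=> i _; rewrite hsF.
rewrite -[X in _ <= X](mulVf (lt0r_neq0 Gpos)) ler_pM2l ?invr_gt0 // -[X in _ <= X]sumE.
apply: ler_sum => i _; apply: ler_wpM2l; first exact: ler0n.
by apply: ler_wpM2l; [exact: ler0n | exact: sqrtC_le_nat].
Qed.
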